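(* Let $\mathsf V$ be a quantale in which $k=\top$ is the top element, $X=(X,a)$ a $\mathsf V$-category, $s=(x_n)_{n\in\mathbb N}$ a Cauchy sequence in $X$ and $x\in X$ such that $s$ converges to $x$. Then $x^*=\psi_s$, i.e. $a(y,x)=\bigvee_N\bigwedge_{n\ge N}a(y,x_n)$ for all $y\in X$.
   Context: A quantale $(\mathsf V,\otimes,k)$ is a complete anti-symmetric lattice with an associative, commutative operation $\otimes$ with neutral element $k$ distributing over arbitrary suprema. A $\mathsf V$-category $(X,a)$ is a set with $a:X\times X\to\mathsf V$ such that $k\le a(x,x)$ and $a(x,y)\otimes a(y,z)\le a(x,z)$. A sequence $s=(x_n)$ is Cauchy if $k\le\bigvee_N\bigwedge_{n,m\ge N}a(x_n,x_m)$; $\psi_s(y)=\bigvee_N\bigwedge_{n\ge N}a(y,x_n)$. For $M\subseteq X$, $\overline M=\{z\in X\mid k\le\bigvee_{y\in M}a(z,y)\otimes a(y,z)\}$; $s$ converges to $x$ if $x\in\overline{\{x_n\mid n\in M\}}$ for every infinite $M\subseteq\mathbb N$. *)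

(* Defs.v *)
From Stdlib Require Import Arith.

Record quantale := Quantale {
  qcar :> Type;
  qle : qcar -> qcar -> Prop;
  qle_refl : forall u, qle u u;
  qle_trans : forall u v w, qle u v -> qle v w -> qle u w;
  qle_antisym : forall u v, qle u v -> qle v u -> u = v;
  qsup : (qcar -> Prop) -> qcar;
  qsup_ub : forall (S : qcar -> Prop) u, S u -> qle u (qsup S);
  qsup_least : forall (S : qcar -> Prop) w,
      (forall u, S u -> qle u w) -> qle (qsup S) w;
  qtens : qcar -> qcar -> qcar;
  qtens_assoc : forall u v w, qtens u (qtens v w) = qtens (qtens u v) w;
  qtens_comm : forall u v, qtens u v = qtens v u;
  qk : qcar;
  qtens_k : forall u, qtens qk u = u;
  qtens_sup : forall u (S : qcar -> Prop),
      qtens u (qsup S) = qsup (fun w => exists v, S v /\ w = qtens u v)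
}.

Arguments qle {V} : rename.
Arguments qsup {V} : rename.
Arguments qtens {V} : rename.
Arguments qk {V} : rename.

Section Q.
Variable V : quantale.

Definition qinf (S : V -> Prop) : V := qsup (fun w => forall u, S u -> qle w u).

Definition supI {I : Type} (f : I -> V) : V := qsup (fun w => exists i, w = f i).
Definition infI {I : Type} (f : I -> V) : V := qinf (fun w => exists i, w = f i).

Definition qtop : V := qsup (fun _ => True).

Definition is_Vcat {X : Type} (a : X -> X -> V) : Prop :=
  (forall x, qle qk (a x x)) /\
  (forall x y z, qle (qtens (a x y) (a y z)) (a x z)).

Section VC.
Variables (X : Type) (a : X -> X -> V).

Definition cauchy (s : nat -> X) : Prop :=
  qle qk (supI (fun N : nat =>
     infI (fun nm : {p : nat * nat | N <= fst p /\ N <= snd p} =>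
             a (s (fst (proj1_sig nm))) (s (snd (proj1_sig nm)))))).

Definition psi (s : nat -> X) (y : X) : V :=
  supI (fun N : nat => infI (fun n : {n : nat | N <= n} => a y (s (proj1_sig n)))).

Definition closure (M : X -> Prop) (z : X) : Prop :=
  qle qk (supI (fun y : {y : X | M y} =>
             qtens (a z (proj1_sig y)) (a (proj1_sig y) z))).

Definition infinite_nat (M : nat -> Prop) : Prop :=
  forall N, exists n, N <= n /\ M n.

Definition converges_to (s : nat -> X) (x : X) : Prop :=
  forall M : nat -> Prop, infinite_nat M ->
    closure (fun z => exists n, M n /\ z = s n) x.

End VC.
End Q.

(* Main.v *)
Require Import Defs.
From Stdlib Require Import Arith Lia.

Section H.
Variable V : quantale.

Lemma inf_lb (S : V -> Prop) u : S u -> qle (qinf V S) u.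
Proof. intros Hu. apply qsup_least. intros w Hw. apply Hw, Hu. Qed.

Lemma inf_greatest (S : V -> Prop) w : (forall u, S u -> qle w u) -> qle w (qinf V S).
Proof. intros H. apply qsup_ub. exact H. Qed.

Lemma tens_mono_r (u v w : V) : qle v w -> qle (qtens u v) (qtens u w).
Proof.
  intros Hvw.
  assert (E : qsup (fun z => z = v \/ z = w) = w).
  { apply qle_antisym.
    - apply qsup_least. intros z [->| ->]; [exact Hvw| apply qle_refl].
    - apply qsup_ub. right; reflexivity. }
  rewrite <- E, qtens_sup. apply qsup_ub. exists v. split; [left; reflexivity|reflexivity].
Qed.

Lemma tens_k_r (u : V) : qtens u qk = u.
Proof. rewrite qtens_comm. apply qtens_k. Qed.

Hypothesis Hk : @qk V = qtop V.

Lemma le_k (u : V) : qle u qk.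
Proof. rewrite Hk. apply qsup_ub. exact I. Qed.

Lemma tens_le_l (u v : V) : qle (qtens u v) u.
Proof. rewrite <- (tens_k_r u) at 2. apply tens_mono_r, le_k. Qed.

Lemma tens_le_r (u v : V) : qle (qtens u v) v.
Proof. rewrite qtens_comm. apply tens_le_l. Qed.

Lemma le_supI_tens {I : Type} (f : I -> V) u w :
  qle qk (supI V f) -> (forall i, qle (qtens u (f i)) w) -> qle u w.
Proof.
  intros Hf Hi. apply qle_trans with (qtens u (supI V f)).
  - rewrite <- (tens_k_r u) at 1. apply tens_mono_r, Hf.
  - unfold supI. rewrite qtens_sup. apply qsup_least.
    intros z [v [[i ->] ->]]. apply Hi.
Qed.
End H.

Theorem corollary3p18 (V : quantale) (Hk : @qk V = qtop V)
  (X : Type) (a : X -> X -> V) (Ha : is_Vcat V a)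
  (s : nat -> X) (Hs : cauchy V X a s) (x : X) (Hx : converges_to V X a s x) :
  forall y : X, a y x = psi V X a s y.
Proof.
  destruct Ha as [Hrefl Htr].
  assert (Hinf : forall N, infinite_nat (fun m => N <= m)).
  { intros N N'. exists (Nat.max N N'). split; lia. }
  intros y. apply qle_antisym.
  - assert (HpsiX : qle qk (psi V X a s x)).
    { apply qle_trans with (1 := Hs). unfold supI at 1. apply qsup_least.
      intros u [N ->].
      apply qle_trans with (infI V (fun n : {n : nat | N <= n} => a x (s (proj1_sig n)))).
      2: { apply qsup_ub. exists N. reflexivity. }
      apply inf_greatest. intros u [[n Hn] ->]. simpl.
      apply (le_supI_tens V _ _ _ (Hx _ (Hinf N))).
      intros [z [m [Hm ->]]]. simpl.
      set (c := infI V _).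
      rewrite qtens_assoc.
      apply qle_trans with (qtens c (a x (s m))); [apply tens_le_l; exact Hk|].
      rewrite qtens_comm.
      apply qle_trans with (qtens (a x (s m)) (a (s m) (s n))); [|apply Htr].
      apply tens_mono_r. unfold c, infI. apply inf_lb.
      exists (exist _ (m, n) (conj Hm Hn)). reflexivity. }
    apply (le_supI_tens V _ _ _ HpsiX). intros N.
    apply qle_trans with (infI V (fun n : {n : nat | N <= n} => a y (s (proj1_sig n)))).
    2: { apply qsup_ub. exists N. reflexivity. }
    apply inf_greatest. intros u [[n Hn] ->]. simpl.
    apply qle_trans with (qtens (a y x) (a x (s n))); [|apply Htr].
    apply tens_mono_r. apply inf_lb. exists (exist _ n Hn). reflexivity.
  - unfold psi, supI at 1. apply qsup_least. intros u [N ->].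
    apply (le_supI_tens V _ _ _ (Hx _ (Hinf N))).
    intros [z [m [Hm ->]]]. simpl.
    set (b := infI V _).
    apply qle_trans with (qtens b (a (s m) x)).
    { apply tens_mono_r. apply tens_le_r; exact Hk. }
    apply qle_trans with (qtens (a y (s m)) (a (s m) x)); [|apply Htr].
    rewrite (qtens_comm _ b), (qtens_comm _ (a y (s m))). apply tens_mono_r.
    unfold b, infI. apply inf_lb. exists (exist _ m Hm). reflexivity.
Qed.
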